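(* Five distinct points $q_1,\dots,q_5\in\widehat{\mathbb H}$ lie on a single 2-sphere or a 2-plane if and only if $Q(q_1,q_2,q_3,q_4)$ and $Q(q_1,q_2,q_3,q_5)$ commute with each other.
   Context: $\mathbb H$ denotes the quaternions (identified with $\mathbb R^4$), $\widehat{\mathbb H}=\mathbb H\cup\{\infty\}$. For four distinct points of $\widehat{\mathbb H}$ the cross-ratio is $Q(q_1,q_2,q_3,q_4)=(q_2-q_1)^{-1}(q_4-q_1)(q_4-q_3)^{-1}(q_2-q_3)\in\mathbb H$, defined by taking limits if some $q_n=\infty$. *)

(* Defs.v *)
From HB Require Import structures.
From mathcomp Require Import all_boot all_order all_algebra.
From mathcomp Require Import reals.
Set Implicit Arguments. Unset Strict Implicit. Unset Printing Implicit Defensive.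
Import Order.TTheory GRing.Theory Num.Theory.
Local Open Scope ring_scope.

Section Quat.
Variable R : realType.

(* q = a + b i + c j + d k *)
Record quat := Quat { qa : R; qb : R; qc : R; qd : R }.

Definition qzero : quat := Quat 0 0 0 0.
Definition qone : quat := Quat 1 0 0 0.
Definition qadd (x y : quat) := Quat (qa x + qa y) (qb x + qb y) (qc x + qc y) (qd x + qd y).
Definition qopp (x : quat) := Quat (- qa x) (- qb x) (- qc x) (- qd x).
Definition qsub (x y : quat) := qadd x (qopp y).
Definition qscale (t : R) (x : quat) := Quat (t * qa x) (t * qb x) (t * qc x) (t * qd x).

(* Hamilton product: i^2 = j^2 = k^2 = ijk = -1 *)
Definition qmul (x y : quat) :=
  Quat (qa x * qa y - qb x * qb y - qc x * qc y - qd x * qd y)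
       (qa x * qb y + qb x * qa y + qc x * qd y - qd x * qc y)
       (qa x * qc y - qb x * qd y + qc x * qa y + qd x * qb y)
       (qa x * qd y + qb x * qc y - qc x * qb y + qd x * qa y).

Definition qconj (x : quat) := Quat (qa x) (- qb x) (- qc x) (- qd x).

Definition qdot (x y : quat) := qa x * qa y + qb x * qb y + qc x * qc y + qd x * qd y.
Definition qnorm2 (x : quat) := qdot x x.

Definition qinv (x : quat) := qscale (qnorm2 x)^-1 (qconj x).

(* extended quaternions: None stands for the point infinity *)
Definition hquat := option quat.

(* Cross-ratio Q(q1,q2,q3,q4) = (q2-q1)^-1 (q4-q1) (q4-q3)^-1 (q2-q3),
   with the limiting values when one point is infinity. *)
Definition crossratio (z1 z2 z3 z4 : hquat) : quat :=
  match z1, z2, z3, z4 with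
  | Some q1, Some q2, Some q3, Some q4 =>
      qmul (qmul (qmul (qinv (qsub q2 q1)) (qsub q4 q1)) (qinv (qsub q4 q3))) (qsub q2 q3)
  | None, Some q2, Some q3, Some q4 => qmul (qinv (qsub q4 q3)) (qsub q2 q3)
  | Some q1, None, Some q3, Some q4 => qmul (qsub q4 q1) (qinv (qsub q4 q3))
  | Some q1, Some q2, None, Some q4 => qmul (qinv (qsub q2 q1)) (qsub q4 q1)
  | Some q1, Some q2, Some q3, None => qmul (qinv (qsub q2 q1)) (qsub q2 q3)
  | _, _, _, _ => qzero (* never used: points are distinct *)
  end.

(* The round 2-sphere in R^4 with center c, radius r > 0, lying in the affine
   hyperplane through c orthogonal to n <> 0.  It does not contain infinity. *)
Definition on_2sphere (c : quat) (r : R) (n : quat) (z : hquat) : Prop :=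
  match z with
  | None => False
  | Some x => qnorm2 (qsub x c) = r ^+ 2 /\ qdot (qsub x c) n = 0
  end.

Definition is_2sphere_data (c : quat) (r : R) (n : quat) : Prop :=
  0 < r /\ n <> qzero.

(* The affine 2-plane p + R u + R v (u, v linearly independent), completed
   by the point infinity in H^ . *)
Definition on_2plane (p u v : quat) (z : hquat) : Prop :=
  match z with
  | None => True
  | Some x => exists a b : R, x = qadd p (qadd (qscale a u) (qscale b v))
  end.

Definition lin_indep2 (u v : quat) : Prop :=
  forall a b : R, qadd (qscale a u) (qscale b v) = qzero -> a = 0 /\ b = 0.

Definition all5 (P : hquat -> Prop) (z1 z2 z3 z4 z5 : hquat) : Prop :=
  P z1 /\ P z2 /\ P z3 /\ P z4 /\ P z5.

Definition on_common_2sphere_or_2plane (z1 z2 z3 z4 z5 : hquat) : Prop :=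
  (exists c r n, is_2sphere_data c r n /\ all5 (on_2sphere c r n) z1 z2 z3 z4 z5)
  \/ (exists p u v, lin_indep2 u v /\ all5 (on_2plane p u v) z1 z2 z3 z4 z5).

Definition distinct5 (z1 z2 z3 z4 z5 : hquat) : Prop :=
  [/\ z1 <> z2, z1 <> z3, z1 <> z4, z1 <> z5 &
   [/\ z2 <> z3, z2 <> z4, z2 <> z5 & [/\ z3 <> z4, z3 <> z5 & z4 <> z5]]].

End Quat.

(* Main.v *)
Require Import Defs.
From HB Require Import structures.
From mathcomp Require Import all_boot all_order all_algebra.
From mathcomp Require Import reals ring lra.
From Stdlib Require Classical_Prop.
Set Implicit Arguments. Unset Strict Implicit. Unset Printing Implicit Defensive.
Import Order.TTheory GRing.Theory Num.Theory.
Local Open Scope ring_scope.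

Ltac qunf := unfold qinv, qsub, qnorm2, qdot, qmul, qscale, qconj, qone, qzero, qadd, qopp in *; simpl in *.

Section S.
Variable R : realType.
Implicit Types x y z p q u v w : quat R.
Local Notation q0 := (qzero R).
Local Notation q1 := (qone R).

Lemma qmulA x y z : qmul x (qmul y z) = qmul (qmul x y) z.
Proof. case: x y z => a b c d [e f g h] [i j k l]; qunf; f_equal; ring. Qed.

Lemma qnorm2_eq0 x : qnorm2 x = 0 -> x = q0.
Proof.
case: x => a b c d; rewrite /qnorm2 /qdot /= => H.
have Ha : a = 0 by nra.
have Hb : b = 0 by nra.
have Hc : c = 0 by nra.
have Hd : d = 0 by nra.
by rewrite Ha Hb Hc Hd.
Qed.

Lemma qnorm2_neq0 x : x <> q0 -> qnorm2 x != 0.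
Proof. by move=> H; apply/eqP => /qnorm2_eq0. Qed.

Lemma qnorm2_ge0 x : 0 <= qnorm2 x.
Proof. case: x => a b c d; rewrite /qnorm2 /qdot /=; nra. Qed.

Lemma qinvl x : x <> q0 -> qmul (qinv x) x = q1.
Proof.
move=> /qnorm2_neq0; case: x => a b c d; qunf => H.
f_equal; field; done.
Qed.

Lemma qinvr x : x <> q0 -> qmul x (qinv x) = q1.
Proof.
move=> /qnorm2_neq0; case: x => a b c d; qunf => H.
f_equal; field; done.
Qed.

Lemma qmul1l x : qmul q1 x = x.
Proof. case: x => a b c d; qunf; f_equal; ring. Qed.
Lemma qmul1r x : qmul x q1 = x.
Proof. case: x => a b c d; qunf; f_equal; ring. Qed.
Lemma qmul0l x : qmul q0 x = q0.
Proof. case: x => a b c d; qunf; f_equal; ring. Qed.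
Lemma qmul0r x : qmul x q0 = q0.
Proof. case: x => a b c d; qunf; f_equal; ring. Qed.

Lemma qnorm2M x y : qnorm2 (qmul x y) = qnorm2 x * qnorm2 y.
Proof. case: x y => a b c d [e f g h]; qunf; ring. Qed.

Lemma qmul_neq0 x y : x <> q0 -> y <> q0 -> qmul x y <> q0.
Proof.
move=> /qnorm2_neq0 Hx /qnorm2_neq0 Hy H.
have : qnorm2 (qmul x y) == 0 by rewrite H /qnorm2 /qdot /=; apply/eqP; ring.
by rewrite qnorm2M mulf_eq0 (negbTE Hx) (negbTE Hy).
Qed.

Lemma qinv_neq0 x : x <> q0 -> qinv x <> q0.
Proof. move=> H H'; have := qinvl H; rewrite H' qmul0l => E.
by have := congr1 (@qa R) E; rewrite /= => /eqP; rewrite eq_sym oner_eq0.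
Qed.

Lemma qinvK x : x <> q0 -> qinv (qinv x) = x.
Proof.
move=> H; have H' := qinv_neq0 H.
by rewrite -[RHS]qmul1l -(qinvl H') -qmulA qinvl // qmul1r.
Qed.

Lemma qsub_neq0 x y : x <> y -> qsub x y <> q0.
Proof.
move=> H E; apply: H; case: x y E => a b c d [e f g h]; qunf => E.
case: E => E1 E2 E3 E4; f_equal; lra.
Qed.

Definition lc3 l1 x l2 y l3 z := qadd (qscale l1 x) (qadd (qscale l2 y) (qscale l3 z)).
Definition nz3 (l1 l2 l3 : R) := ~ (l1 = 0 /\ l2 = 0 /\ l3 = 0).
Definition dep3 x y z := exists l1 l2 l3, nz3 l1 l2 l3 /\ lc3 l1 x l2 y l3 z = q0.

Lemma lc3_mulL p l1 x l2 y l3 z :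
  qmul p (lc3 l1 x l2 y l3 z) = lc3 l1 (qmul p x) l2 (qmul p y) l3 (qmul p z).
Proof. case: p x y z => ? ? ? ? [? ? ? ?] [? ? ? ?] [? ? ? ?]; rewrite /lc3; qunf; f_equal; ring. Qed.
Lemma lc3_mulR p l1 x l2 y l3 z :
  qmul (lc3 l1 x l2 y l3 z) p = lc3 l1 (qmul x p) l2 (qmul y p) l3 (qmul z p).
Proof. case: p x y z => ? ? ? ? [? ? ? ?] [? ? ? ?] [? ? ? ?]; rewrite /lc3; qunf; f_equal; ring. Qed.

Lemma dep3_mulL_imp p x y z : dep3 x y z -> dep3 (qmul p x) (qmul p y) (qmul p z).
Proof. case=> l1 [l2 [l3 [Hn H]]]; exists l1, l2, l3; split=> //; by rewrite -lc3_mulL H qmul0r. Qed.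
Lemma dep3_mulR_imp p x y z : dep3 x y z -> dep3 (qmul x p) (qmul y p) (qmul z p).
Proof. case=> l1 [l2 [l3 [Hn H]]]; exists l1, l2, l3; split=> //; by rewrite -lc3_mulR H qmul0l. Qed.

Lemma dep3_mulL p x y z : p <> q0 -> dep3 (qmul p x) (qmul p y) (qmul p z) <-> dep3 x y z.
Proof.
move=> Hp; split; last exact: dep3_mulL_imp.
by move=> /(dep3_mulL_imp (qinv p)); rewrite !qmulA qinvl // !qmul1l.
Qed.
Lemma dep3_mulR p x y z : p <> q0 -> dep3 (qmul x p) (qmul y p) (qmul z p) <-> dep3 x y z.
Proof.
move=> Hp; split; last exact: dep3_mulR_imp.
by move=> /(dep3_mulR_imp (qinv p)); rewrite -!qmulA qinvr // !qmul1r.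
Qed.

Lemma dep3_12 x y z : dep3 x y z -> dep3 y x z.
Proof.
case=> l1 [l2 [l3 [Hn H]]]; exists l2, l1, l3; split.
  by move=> [? [? ?]]; apply: Hn.
by rewrite -H /lc3; case: x y z {H} => ? ? ? ? [? ? ? ?] [? ? ? ?]; qunf; f_equal; ring.
Qed.
Lemma dep3_23 x y z : dep3 x y z -> dep3 x z y.
Proof.
case=> l1 [l2 [l3 [Hn H]]]; exists l1, l3, l2; split.
  by move=> [? [? ?]]; apply: Hn.
by rewrite -H /lc3; case: x y z {H} => ? ? ? ? [? ? ? ?] [? ? ? ?]; qunf; f_equal; ring.
Qed.

Lemma dep3_shift_imp a b x y z :
  dep3 x y z -> dep3 x (qadd y (qscale a x)) (qadd z (qscale b x)).
Proof.
case=> l1 [l2 [l3 [Hn H]]]; exists (l1 - l2 * a - l3 * b), l2, l3; split.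
  move=> [H1 [H2 H3]]; apply: Hn; split=> //; move: H1; rewrite H2 H3; lra.
by rewrite -H /lc3; case: x y z {H} => ? ? ? ? [? ? ? ?] [? ? ? ?]; qunf; f_equal; ring.
Qed.

Lemma dep3_shift a b x y z :
  dep3 x (qadd y (qscale a x)) (qadd z (qscale b x)) <-> dep3 x y z.
Proof.
split; last exact: dep3_shift_imp.
move=> /(dep3_shift_imp (- a) (- b)).
have E : forall w c, qadd (qadd w (qscale c x)) (qscale (- c) x) = w.
  by move=> w c; case: x w {y z} => ? ? ? ? [? ? ? ?]; qunf; f_equal; ring.
by rewrite !E.
Qed.


Lemma commute_dep3 x y : qmul x y = qmul y x <-> dep3 q1 x y.
Proof.
split.
- case: x y => a b c d [e f g h]; qunf => E.
  case: E => _ Eb Ec Ed.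
  have Cb : c * h = d * g by lra.
  have Cc : d * f = b * h by lra.
  have Cd : b * g = c * f by lra.
  have [b0|b0] := eqVneq b 0.
    have [c0|c0] := eqVneq c 0.
      have [d0|d0] := eqVneq d 0.
        exists (- a), 1, 0; split; first by move=> [_ [/eqP]]; rewrite oner_eq0.
        rewrite /lc3; qunf; rewrite b0 c0 d0; f_equal; ring.
      exists (- (h * a - d * e)), h, (- d); split; first by move=> [_ [_ /eqP]]; rewrite oppr_eq0 (negbTE d0).
      rewrite /lc3; qunf; f_equal; [ring | | |]; nra.
    exists (- (g * a - c * e)), g, (- c); split; first by move=> [_ [_ /eqP]]; rewrite oppr_eq0 (negbTE c0).
    rewrite /lc3; qunf; f_equal; [ring | | |]; nra.
  exists (- (f * a - b * e)), f, (- b); split; first by move=> [_ [_ /eqP]]; rewrite oppr_eq0 (negbTE b0).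
  rewrite /lc3; qunf; f_equal; [ring | | |]; nra.
- case=> l0 [l1 [l2 [Hn H]]].
  case: x y H => a b c d [e f g h]; rewrite /lc3; qunf => [[E1 E2 E3 E4]].
  have key : forall s t u v : R, l1 * s + l2 * t = 0 -> l1 * u + l2 * v = 0 -> s * v = u * t.
    move=> s t u v Es Eu; apply/eqP; rewrite -subr_eq0; apply/eqP.
    have [k1|k1] := eqVneq l1 0.
      have [k2|k2] := eqVneq l2 0.
        by exfalso; apply: Hn; split=> //; move: E1; rewrite k1 k2; lra.
      apply: (mulfI k2); rewrite mulr0.
      have -> : l2 * (s * v - u * t) = s * (l1 * u + l2 * v) - u * (l1 * s + l2 * t) by rewrite k1; ring.
      by rewrite Es Eu; ring.
    apply: (mulfI k1); rewrite mulr0.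
    have -> : l1 * (s * v - u * t) = v * (l1 * s + l2 * t) - t * (l1 * u + l2 * v) by ring.
    by rewrite Es Eu; ring.
  have C1 := key c g d h (ltac:(lra)) (ltac:(lra)).
  have C2 := key d h b f (ltac:(lra)) (ltac:(lra)).
  have C3 := key b f c g (ltac:(lra)) (ltac:(lra)).
  f_equal; nra.
Qed.

Definition inspan u v x := exists a b : R, x = qadd (qscale a u) (qscale b v).
Definition inplane x y z :=
  exists u v, lin_indep2 u v /\ [/\ inspan u v x, inspan u v y & inspan u v z].

Lemma inspan0 u v : inspan u v q0.
Proof. by exists 0, 0; case: u v => ? ? ? ? [? ? ? ?]; qunf; f_equal; ring. Qed.

Lemma inspan_lc u v x y s t : inspan u v x -> inspan u v y ->
  inspan u v (qadd (qscale s x) (qscale t y)).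
Proof.
move=> [a [b ->]] [c [d ->]]; exists (s * a + t * c), (s * b + t * d).
by case: u v => ? ? ? ? [? ? ? ?]; qunf; f_equal; ring.
Qed.

Lemma inspan_l u v : inspan u v u.
Proof. by exists 1, 0; case: u v => ? ? ? ? [? ? ? ?]; qunf; f_equal; ring. Qed.

Lemma ext1 x : exists u v, lin_indep2 u v /\ inspan u v x.
Proof.
have [H|H] := Classical_Prop.classic (qb x = 0 /\ qc x = 0 /\ qd x = 0).
- have [Ha|Ha] := eqVneq (qa x) 0.
  + exists (Quat 1 0 0 0), (Quat 0 1 0 0); split.
      by move=> a b; qunf => [[E1 E2 _ _]]; split; lra.
    exists 0, 0; case: x H Ha => ? ? ? ? /= [-> [-> ->]] ->; qunf; f_equal; ring.
  + exists x, (Quat 0 1 0 0); split; last exact: inspan_l.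
    move=> a b; case: x H Ha => xa ? ? ? /= [-> [-> ->]] Ha; qunf => [[E1 E2 _ _]].
    have a0 : a = 0 by apply/eqP; move: E1; rewrite mulr0 addr0 => /eqP; rewrite mulf_eq0 (negbTE Ha) orbF.
    by split=> //; move: E2; rewrite a0; lra.
- exists x, (Quat 1 0 0 0); split; last exact: inspan_l.
  move=> a b; case: x H => xa xb xc xd /= H; qunf => [[E1 E2 E3 E4]].
  have a0 : a = 0.
    have [ab|ab] := eqVneq xb 0; last by apply/eqP; move: E2; rewrite mulr0 addr0 => /eqP; rewrite mulf_eq0 (negbTE ab) orbF.
    have [ac|ac] := eqVneq xc 0; last by apply/eqP; move: E3; rewrite mulr0 addr0 => /eqP; rewrite mulf_eq0 (negbTE ac) orbF.
    have [ad|ad] := eqVneq xd 0; last by apply/eqP; move: E4; rewrite mulr0 addr0 => /eqP; rewrite mulf_eq0 (negbTE ad) orbF.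
    by exfalso; apply: H.
  by split=> //; move: E1; rewrite a0; lra.
Qed.

Lemma solve2 (l1 l3 a c : R) : l3 != 0 -> l1 * a + l3 * c = 0 -> c = - l1 / l3 * a.
Proof.
move=> H E; have -> : c = (l1 * a + l3 * c - l1 * a) / l3 by field.
by rewrite E; field.
Qed.

Lemma solve3 (l1 l2 l3 a b c : R) : l3 != 0 -> l1 * a + (l2 * b + l3 * c) = 0 ->
  c = - l1 / l3 * a + - l2 / l3 * b.
Proof.
move=> H E; have -> : c = (l1 * a + (l2 * b + l3 * c) - l1 * a - l2 * b) / l3 by field.
by rewrite E; field.
Qed.

Lemma ext2 x y : exists u v, lin_indep2 u v /\ inspan u v x /\ inspan u v y.
Proof.
have [H|H] := Classical_Prop.classic (lin_indep2 x y).
  exists x, y; split=> //; split; first exact: inspan_l.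
  by exists 0, 1; case: x y {H} => ? ? ? ? [? ? ? ?]; qunf; f_equal; ring.
have [a [b [E Hab]]] : exists a b, qadd (qscale a x) (qscale b y) = q0 /\ ~ (a = 0 /\ b = 0).
  apply: Classical_Prop.NNPP => C; apply: H => a b E.
  by apply: Classical_Prop.NNPP => C'; apply: C; exists a, b.
have [b0|b0] := eqVneq b 0.
  have x0 : x = q0.
    have a0 : a != 0 by apply/eqP => a0; apply: Hab.
    move: E; rewrite b0; case: x {H} => ? ? ? ?; qunf => [[E1 E2 E3 E4]].
    f_equal; apply: (mulfI a0); rewrite mulr0; lra.
  have [u [v [Huv Hy]]] := ext1 y; exists u, v; split=> //; split=> //.
  by rewrite x0; exact: inspan0.
have [u [v [Huv Hx]]] := ext1 x; exists u, v; split=> //; split=> //.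
have -> : y = qadd (qscale (- a / b) x) (qscale 0 x).
  move: E; case: x y {H Hx} => ? ? ? ? [? ? ? ?]; qunf => [[E1 E2 E3 E4]].
  f_equal; rewrite mul0r addr0; apply: (solve2 b0); lra.
exact: inspan_lc.
Qed.

Lemma LA1 x y z : dep3 x y z -> inplane x y z.
Proof.
case=> l1 [l2 [l3 [Hn E]]].
have [l30|l30] := eqVneq l3 0.
  have [l20|l20] := eqVneq l2 0.
    have x0 : x = q0.
      have l10 : l1 != 0 by apply/eqP => l10; apply: Hn.
      move: E; rewrite /lc3 l20 l30; case: x => ? ? ? ?; qunf => [[E1 E2 E3 E4]].
      f_equal; apply: (mulfI l10); rewrite mulr0; lra.
    have [u [v [Huv [Hy Hz]]]] := ext2 y z; exists u, v; split=> //; split=> //.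
    by rewrite x0; exact: inspan0.
  have [u [v [Huv [Hx Hz]]]] := ext2 x z; exists u, v; split=> //; split=> //.
  have -> : y = qadd (qscale (- l1 / l2) x) (qscale 0 x).
    move: E; rewrite /lc3 l30; case: x y z {Hx Hz} => ? ? ? ? [? ? ? ?] [? ? ? ?]; qunf => [[E1 E2 E3 E4]].
    f_equal; rewrite mul0r addr0; apply: (solve2 l20); lra.
  exact: inspan_lc.
have [u [v [Huv [Hx Hy]]]] := ext2 x y; exists u, v; split=> //; split=> //.
have -> : z = qadd (qscale (- l1 / l3) x) (qscale (- l2 / l3) y).
  move: E; rewrite /lc3; case: x y z {Hx Hy} => ? ? ? ? [? ? ? ?] [? ? ? ?]; qunf => [[E1 E2 E3 E4]].
  f_equal; apply: (solve3 l30); lra.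
exact: inspan_lc.
Qed.

Lemma LA2 u v x y z : inspan u v x -> inspan u v y -> inspan u v z -> dep3 x y z.
Proof.
move=> [a1 [b1 ->]] [a2 [b2 ->]] [a3 [b3 ->]].
have [H|H] := Classical_Prop.classic (nz3 (a2 * b3 - a3 * b2) (a3 * b1 - a1 * b3) (a1 * b2 - a2 * b1)).
  exists (a2 * b3 - a3 * b2), (a3 * b1 - a1 * b3), (a1 * b2 - a2 * b1); split=> //.
  by rewrite /lc3; case: u v {H} => ? ? ? ? [? ? ? ?]; qunf; f_equal; ring.
have [D1 [D2 D3]] : [/\ a2 * b3 - a3 * b2 = 0, a3 * b1 - a1 * b3 = 0 & a1 * b2 - a2 * b1 = 0].
  by apply: Classical_Prop.NNPP => C; apply: H => [[? [? ?]]]; apply: C.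
have [a10|a10] := eqVneq a1 0.
  have [b10|b10] := eqVneq b1 0.
    exists 1, 0, 0; split; first by move=> [/eqP]; rewrite oner_eq0.
    by rewrite /lc3 a10 b10; case: u v {H} => ? ? ? ? [? ? ? ?]; qunf; f_equal; ring.
  exists b2, (- b1), 0; split; first by move=> [_ [/eqP]]; rewrite oppr_eq0 (negbTE b10).
  have E : b2 * a1 - b1 * a2 = 0 by rewrite a10; move: D3; rewrite a10; lra.
  have -> : lc3 b2 (qadd (qscale a1 u) (qscale b1 v)) (- b1) (qadd (qscale a2 u) (qscale b2 v)) 0
     (qadd (qscale a3 u) (qscale b3 v)) = qscale (b2 * a1 - b1 * a2) u.
    by rewrite /lc3; case: u v {H} => ? ? ? ? [? ? ? ?]; qunf; f_equal; ring.
  by rewrite E; case: u {H} => ? ? ? ?; qunf; f_equal; ring.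
exists a2, (- a1), 0; split; first by move=> [_ [/eqP]]; rewrite oppr_eq0 (negbTE a10).
have -> : lc3 a2 (qadd (qscale a1 u) (qscale b1 v)) (- a1) (qadd (qscale a2 u) (qscale b2 v)) 0
     (qadd (qscale a3 u) (qscale b3 v)) = qscale (- (a1 * b2 - a2 * b1)) v.
  by rewrite /lc3; case: u v {H} => ? ? ? ? [? ? ? ?]; qunf; f_equal; ring.
by rewrite D3; case: v {H} => ? ? ? ?; qunf; f_equal; ring.
Qed.


Definition qco x (j : nat) : R :=
  match j with 0 => qa x | 1 => qb x | 2 => qc x | _ => qd x end.
Definition mat3 x y z : 'M[R]_(3,4) :=
  \matrix_(i < 3, j < 4) qco (nth q0 [:: x; y; z] i) j.

Lemma ker_ex m n (A : 'M[R]_(m, n)) : ~~ row_free A -> exists2 v : 'rV_m, v != 0 & v *m A = 0.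
Proof. rewrite -kermx_eq0 => /rowV0Pn [v Hv v0]; exists v => //; exact/sub_kermxP. Qed.

Lemma notfree_dep3 x y z : ~~ row_free (mat3 x y z) -> dep3 x y z.
Proof.
move=> /ker_ex [v v0 Hv].
exists (v 0 ord0), (v 0 (lift ord0 ord0)), (v 0 (lift ord0 (lift ord0 ord0))); split.
  move=> [H1 [H2 H3]]; move/eqP: v0; apply; apply/rowP => i; rewrite mxE.
  case: i => [[|[|[|i]]] Hi] //.
  - by rewrite -H1; congr (v 0 _); apply: val_inj.
  - by rewrite -H2; congr (v 0 _); apply: val_inj.
  - by rewrite -H3; congr (v 0 _); apply: val_inj.
move/matrixP: Hv => E.
have E0 := E 0 ord0; have E1 := E 0 (lift ord0 ord0); have E2 := E 0 (lift ord0 (lift ord0 ord0)).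
have E3 := E 0 (lift ord0 (lift ord0 (lift ord0 ord0))).
move: E0 E1 E2 E3; rewrite !mxE !big_ord_recl !big_ord0 !mxE /=.
rewrite /lc3; case: x y z {E} => ? ? ? ? [? ? ? ?] [? ? ? ?]; qunf => E0 E1 E2 E3.
f_equal; lra.
Qed.

Lemma dep3_rank x y z : (\rank (mat3 x y z) <= 2)%N -> dep3 x y z.
Proof.
move=> H; apply: notfree_dep3; apply/negP => /eqP F; move: H; rewrite F.
by [].
Qed.


Lemma LA3 M N x y z : lin_indep2 M N ->
  qdot x M = 0 -> qdot y M = 0 -> qdot z M = 0 ->
  qdot x N = 0 -> qdot y N = 0 -> qdot z N = 0 -> dep3 x y z.
Proof.
move=> HMN xM yM zM xN yN zN.
pose B : 'M[R]_(4,2) := \matrix_(i < 4, j < 2) qco (if val j == 0%N then M else N) i.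
have AB : mat3 x y z *m B = 0.
  apply/matrixP => i j; rewrite !mxE !big_ord_recl !big_ord0 !mxE /=.
  case: i => [[|[|[|i]]] Hi] //; case: j => [[|[|j]] Hj] //=;
  move: xM yM zM xN yN zN; rewrite /qdot /=; lra.
have rB : \rank B = 2%N.
  rewrite -mxrank_tr; apply/eqP; apply: contraT => /ker_ex [w w0 Hw].
  move/matrixP: Hw => E.
  have E0 := E 0 ord0; have E1 := E 0 (lift ord0 ord0); have E2 := E 0 (lift ord0 (lift ord0 ord0)).
  have E3 := E 0 (lift ord0 (lift ord0 (lift ord0 ord0))).
  move: E0 E1 E2 E3; rewrite !mxE !big_ord_recl !big_ord0 !mxE /= => E0 E1 E2 E3.
  have [H1 H2] : w 0 ord0 = 0 /\ w 0 (lift ord0 ord0) = 0.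
    apply: HMN; move: E0 E1 E2 E3; case: M N {xM yM zM xN yN zN AB B E} => ? ? ? ? [? ? ? ?].
    qunf => E0 E1 E2 E3; f_equal; lra.
  suff : w = 0 by move/eqP: w0.
  apply/rowP => i; rewrite mxE.
  case: i => [[|[|i]] Hi] //.
  - by rewrite -H1; congr (w 0 _); apply: val_inj.
  - by rewrite -H2; congr (w 0 _); apply: val_inj.
have := mulmx0_rank_max AB; rewrite rB => H.
by apply: dep3_rank; rewrite -(leq_add2r 2); apply: leq_trans H _.
Qed.

Lemma orth_ex x y z : exists N, N <> q0 /\ [/\ qdot x N = 0, qdot y N = 0 & qdot z N = 0].
Proof.
have : ~~ row_free (mat3 x y z)^T.
  apply/negP => /eqP F; have := rank_leq_col (mat3 x y z)^T; rewrite F; by [].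
move=> /ker_ex [w w0 Hw].
exists (Quat (w 0 ord0) (w 0 (lift ord0 ord0)) (w 0 (lift ord0 (lift ord0 ord0)))
    (w 0 (lift ord0 (lift ord0 (lift ord0 ord0))))); split.
  move=> [H1 H2 H3 H4]; move/eqP: w0; apply; apply/rowP => i; rewrite mxE.
  case: i => [[|[|[|[|i]]]] Hi] //.
  - by rewrite -H1; congr (w 0 _); apply: val_inj.
  - by rewrite -H2; congr (w 0 _); apply: val_inj.
  - by rewrite -H3; congr (w 0 _); apply: val_inj.
  - by rewrite -H4; congr (w 0 _); apply: val_inj.
move/matrixP: Hw => E.
have E0 := E 0 ord0; have E1 := E 0 (lift ord0 ord0); have E2 := E 0 (lift ord0 (lift ord0 ord0)).
move: E0 E1 E2; rewrite !mxE !big_ord_recl !big_ord0 !mxE /= => E0 E1 E2.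
rewrite /qdot /=; split; lra.
Qed.


Definition iota c (z : hquat R) : quat R :=
  match z with None => q0 | Some x => qinv (qsub x c) end.

Lemma qsub_lc (a b : quat R) : qsub a b = qadd (qscale 1 a) (qscale (-1) b).
Proof. by case: a b => ? ? ? ? [? ? ? ?]; qunf; f_equal; ring. Qed.

Lemma qdot_sub (a b m : quat R) : qdot (qsub a b) m = qdot a m - qdot b m.
Proof. by case: a b m => ? ? ? ? [? ? ? ?] [? ? ? ?]; qunf; ring. Qed.

Lemma inspan_inv u v y : inspan u v y -> inspan (qconj u) (qconj v) (qinv y).
Proof.
move=> [a [b E]]; rewrite /qinv; move: (qnorm2 y)^-1 => t; rewrite E.
by exists (t * a), (t * b); case: u v {E} => ? ? ? ? [? ? ? ?]; qunf; f_equal; ring.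
Qed.

Lemma indep_conj u v : lin_indep2 u v -> lin_indep2 (qconj u) (qconj v).
Proof.
move=> H a b E; apply: H; move: E; case: u v => ? ? ? ? [? ? ? ?]; qunf => [[E1 E2 E3 E4]].
f_equal; lra.
Qed.

Lemma orth_indep M N : M <> q0 -> N <> q0 -> qdot M N = 0 -> lin_indep2 M N.
Proof.
move=> /qnorm2_neq0 HM /qnorm2_neq0 HN HMN a b E.
have E1 : qdot (qadd (qscale a M) (qscale b N)) M = a * qnorm2 M + b * qdot M N.
  by case: M N {HM HN HMN E} => ? ? ? ? [? ? ? ?]; qunf; ring.
have E2 : qdot (qadd (qscale a M) (qscale b N)) N = a * qdot M N + b * qnorm2 N.
  by case: M N {HM HN HMN E E1} => ? ? ? ? [? ? ? ?]; qunf; ring.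
rewrite E HMN mulr0 addr0 in E1; rewrite E HMN mulr0 add0r in E2.
have z0 : qdot q0 M = 0 by rewrite /qdot /=; ring.
have z1 : qdot q0 N = 0 by rewrite /qdot /=; ring.
split.
  by apply: (mulIf HM); rewrite mul0r -E1 z0.
by apply: (mulIf HN); rewrite mul0r -E2 z1.
Qed.


Lemma qdot_inv_conj (v m : quat R) : qdot (qinv v) (qconj m) = (qnorm2 v)^-1 * qdot v m.
Proof. by case: v m => ? ? ? ? [? ? ? ?]; qunf; ring. Qed.

Lemma qnorm2_sub (a b : quat R) : qnorm2 (qsub a b) = qnorm2 a - 2 * qdot a b + qnorm2 b.
Proof. by case: a b => ? ? ? ? [? ? ? ?]; qunf; ring. Qed.

Lemma qnorm2_inv v : v <> q0 -> qnorm2 (qinv v) = (qnorm2 v)^-1.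
Proof. move=> /qnorm2_neq0; case: v => ? ? ? ?; qunf => H; field; done. Qed.

Lemma qnorm2_conj (a : quat R) : qnorm2 (qconj a) = qnorm2 a.
Proof. by case: a => ? ? ? ?; qunf; ring. Qed.

Lemma qdot_conj (a b : quat R) : qdot (qconj a) (qconj b) = qdot a b.
Proof. by case: a b => ? ? ? ? [? ? ? ?]; qunf; ring. Qed.

Lemma qdotC (a b : quat R) : qdot a b = qdot b a.
Proof. by case: a b => ? ? ? ? [? ? ? ?]; qunf; ring. Qed.

Lemma qnorm2_subC (a b : quat R) : qnorm2 (qsub a b) = qnorm2 (qsub b a).
Proof. by case: a b => ? ? ? ? [? ? ? ?]; qunf; ring. Qed.

Lemma sph_dot w m : w <> q0 -> qnorm2 (qsub w m) = qnorm2 m -> qdot (qinv w) (qconj m) = 1/2.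
Proof.
move=> Hw H; have Hn := qnorm2_neq0 Hw.
rewrite qdot_inv_conj; rewrite qnorm2_sub in H.
have -> : qdot w m = qnorm2 w / 2 by apply/eqP; rewrite -subr_eq0; apply/eqP; lra.
by field.
Qed.

Lemma sph_dot0 w n : qdot w n = 0 -> qdot (qinv w) (qconj n) = 0.
Proof. by move=> H; rewrite qdot_inv_conj H mulr0. Qed.

Lemma isph v M N : v <> q0 -> qdot v M = 1/2 -> qdot v N = 0 -> qdot M N = 0 ->
  qnorm2 (qsub (qinv v) (qconj M)) = qnorm2 M /\ qdot (qsub (qinv v) (qconj M)) (qconj N) = 0.
Proof.
move=> Hv HM HN HMN; have Hn := qnorm2_neq0 Hv; split.
  by rewrite qnorm2_sub qnorm2_inv // qdot_inv_conj HM qnorm2_conj; field.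
by rewrite qdot_sub qdot_inv_conj HN qdot_conj HMN; ring.
Qed.

Lemma gram_neq0 u v : lin_indep2 u v -> qnorm2 u * qnorm2 v - qdot u v ^+ 2 != 0.
Proof.
move=> H; apply/eqP => G.
have u0 : u <> q0.
  move=> u0; have := H 1 0; rewrite u0 => /(_ _) [|/eqP]; last by rewrite oner_eq0.
  by case: v {H G} => ? ? ? ?; qunf; f_equal; ring.
have Hu := qnorm2_neq0 u0.
have E : qnorm2 (qadd (qscale (- qdot u v) u) (qscale (qnorm2 u) v)) =
  qnorm2 u * (qnorm2 u * qnorm2 v - qdot u v ^+ 2).
  by case: u v {H G u0 Hu} => ? ? ? ? [? ? ? ?]; qunf; ring.
rewrite G mulr0 in E.
have [_ /eqP] := H _ _ (qnorm2_eq0 E); by rewrite (negbTE Hu).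
Qed.

Lemma gram_schmidt u v y : lin_indep2 u v -> ~ inspan u v y ->
  exists p0, [/\ p0 <> q0, qdot p0 u = 0, qdot p0 v = 0 &
    exists a b, y = qadd p0 (qadd (qscale a u) (qscale b v))].
Proof.
move=> H Hy; have Hg := gram_neq0 H.
set g := qnorm2 u * qnorm2 v - qdot u v ^+ 2 in Hg.
pose al := (qnorm2 v * qdot y u - qdot u v * qdot y v) / g.
pose be := (qnorm2 u * qdot y v - qdot u v * qdot y u) / g.
exists (qadd y (qadd (qscale (- al) u) (qscale (- be) v))); split.
- move=> E; apply: Hy; exists al, be.
  move: E; rewrite /al /be; clear al be; move: (_ / g) (_ / g) => s t.
  by case: u v y {H Hg g} => ? ? ? ? [? ? ? ?] [? ? ? ?]; qunf => [[E1 E2 E3 E4]]; f_equal; lra.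
- move: Hg; rewrite /al /be /g; clear al be; case: u v y {H Hy g} => ? ? ? ? [? ? ? ?] [? ? ? ?]; qunf => Hg.
  field; done.
- move: Hg; rewrite /al /be /g; clear al be; case: u v y {H Hy g} => ? ? ? ? [? ? ? ?] [? ? ? ?]; qunf => Hg.
  field; done.
- exists al, be; rewrite /al /be; clear al be; move: (_ / g) (_ / g) => s t.
  by case: u v y {H Hy Hg g} => ? ? ? ? [? ? ? ?] [? ? ? ?]; qunf; f_equal; ring.
Qed.


Lemma Some_neq (x c : quat R) : Some x <> Some c -> x <> c.
Proof. by move=> H E; apply: H; rewrite E. Qed.

Lemma PS c0 r n c (z : hquat R) : is_2sphere_data c0 r n -> on_2sphere c0 r n (Some c) ->
  on_2sphere c0 r n z -> z <> Some c ->
  qdot (iota c z) (qconj (qsub c0 c)) = 1/2 /\ qdot (iota c z) (qconj n) = 0.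
Proof.
move=> _ [Hc1 Hc2]; case: z => [x|] //= [Hx1 Hx2] /Some_neq Hxc.
have Hw := qsub_neq0 Hxc; split.
  apply: sph_dot => //.
  have -> : qsub (qsub x c) (qsub c0 c) = qsub x c0.
    by case: x c c0 {Hx1 Hx2 Hc1 Hc2 Hxc Hw} => ? ? ? ? [? ? ? ?] [? ? ? ?]; qunf; f_equal; ring.
  by rewrite Hx1 qnorm2_subC Hc1.
apply: sph_dot0.
have -> : qdot (qsub x c) n = qdot (qsub x c0) n - qdot (qsub c c0) n.
  by case: x c c0 n {Hx1 Hx2 Hc1 Hc2 Hxc Hw} => ? ? ? ? [? ? ? ?] [? ? ? ?] [? ? ? ?]; qunf; ring.
by rewrite Hx2 Hc2 subrr.
Qed.

Lemma PP p u v c (z : hquat R) : on_2plane p u v (Some c) -> on_2plane p u v z -> z <> Some c ->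
  inspan (qconj u) (qconj v) (iota c z).
Proof.
move=> [a' [b' Ec]]; case: z => [x|] /=; last by move=> _ _; exact: inspan0.
move=> [a [b Ex]] _; apply: inspan_inv; exists (a - a'), (b - b'); rewrite Ex Ec.
by case: p u v {Ex Ec} => ? ? ? ? [? ? ? ?] [? ? ? ?]; qunf; f_equal; ring.
Qed.

Lemma QA u v c (z : hquat R) : inspan u v (iota c z) -> z <> Some c -> on_2plane c (qconj u) (qconj v) z.
Proof.
case: z => [x|] //= H /Some_neq Hxc; have Hw := qsub_neq0 Hxc.
move/inspan_inv: H; rewrite qinvK // => -[a [b E]]; exists a, b; rewrite -E.
by case: x c {E Hxc Hw} => ? ? ? ? [? ? ? ?]; qunf; f_equal; ring.
Qed.

Lemma QB M N c (z : hquat R) : M <> q0 -> N <> q0 -> qdot M N = 0 ->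
  qdot (iota c z) M = 1/2 -> qdot (iota c z) N = 0 -> z <> Some c ->
  on_2sphere (qadd c (qconj M)) (Num.sqrt (qnorm2 M)) (qconj N) z.
Proof.
move=> HM HN HMN; case: z => [x|] /=; last first.
  by move=> E _ _; move: E; rewrite /qdot /= !mul0r !addr0 => /eqP; rewrite eq_sym mulf_eq0 invr_eq0 !pnatr_eq0 oner_eq0.
move=> H1 H2 /Some_neq Hxc; have Hw := qsub_neq0 Hxc.
have Hv := qinv_neq0 Hw.
have [E1 E2] := isph Hv H1 H2 HMN.
rewrite qinvK // in E1 E2.
have -> : qsub x (qadd c (qconj M)) = qsub (qsub x c) (qconj M).
  by case: x c M {E1 E2 H1 H2 Hxc Hw Hv HM HMN} => ? ? ? ? [? ? ? ?] [? ? ? ?]; qunf; f_equal; ring.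
by rewrite E1 E2 sqr_sqrtr // qnorm2_ge0.
Qed.

Lemma QBc (M N c : quat R) : qdot M N = 0 ->
  on_2sphere (qadd c (qconj M)) (Num.sqrt (qnorm2 M)) (qconj N) (Some c).
Proof.
move=> HMN /=; rewrite sqr_sqrtr ?qnorm2_ge0 //.
have -> : qsub c (qadd c (qconj M)) = qopp (qconj M).
  by case: c M {HMN} => ? ? ? ? [? ? ? ?]; qunf; f_equal; ring.
split; first by case: M {HMN} => ? ? ? ?; qunf; ring.
rewrite -[RHS]oppr0 -HMN; case: M N {HMN} => ? ? ? ? [? ? ? ?]; qunf; ring.
Qed.


Lemma span_shift u v (y v1 : quat R) : inspan u v (qsub y v1) -> inspan u v v1 -> inspan u v y.
Proof.
move=> H1 H2; have -> : y = qadd (qscale 1 (qsub y v1)) (qscale 1 v1).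
  by case: y v1 {H1 H2} => ? ? ? ? [? ? ? ?]; qunf; f_equal; ring.
exact: inspan_lc.
Qed.

Lemma sub_span u v (a b : quat R) : inspan u v a -> inspan u v b -> inspan u v (qsub a b).
Proof. by move=> Ha Hb; rewrite qsub_lc; apply: inspan_lc. Qed.

Lemma plane_pt u v p0 N0 (y v1 : quat R) al be :
  p0 <> q0 -> qdot p0 u = 0 -> qdot p0 v = 0 ->
  qdot u N0 = 0 -> qdot v N0 = 0 -> qdot p0 N0 = 0 ->
  v1 = qadd p0 (qadd (qscale al u) (qscale be v)) -> inspan u v (qsub y v1) ->
  qdot y (qscale (1 / (2 * qnorm2 p0)) p0) = 1/2 /\ qdot y N0 = 0.
Proof.
move=> Hp pu pv uN vN pN Ev1 [a [b E]].
have Ey : y = qadd p0 (qadd (qscale (al + a) u) (qscale (be + b) v)).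
  have -> : y = qadd v1 (qsub y v1) by case: y v1 {E Ev1} => ? ? ? ? [? ? ? ?]; qunf; f_equal; ring.
  rewrite E Ev1; by case: p0 u v {Hp pu pv uN vN pN Ev1 E} => ? ? ? ? [? ? ? ?] [? ? ? ?]; qunf; f_equal; ring.
have Hn := qnorm2_neq0 Hp.
rewrite Ey; split.
  have -> : qdot (qadd p0 (qadd (qscale (al + a) u) (qscale (be + b) v))) (qscale (1 / (2 * qnorm2 p0)) p0)
    = (1 / (2 * qnorm2 p0)) * (qnorm2 p0 + (al + a) * qdot p0 u + (be + b) * qdot p0 v).
    by case: p0 u v {Hp pu pv uN vN pN Ev1 E Ey Hn} => ? ? ? ? [? ? ? ?] [? ? ? ?]; qunf; ring.
  by rewrite pu pv; field.
have -> : qdot (qadd p0 (qadd (qscale (al + a) u) (qscale (be + b) v))) N0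
    = qdot p0 N0 + (al + a) * qdot u N0 + (be + b) * qdot v N0.
  by case: p0 u v N0 {Hp pu pv uN vN pN Ev1 E Ey Hn} => ? ? ? ? [? ? ? ?] [? ? ? ?] [? ? ? ?]; qunf; ring.
by rewrite pN uN vN; ring.
Qed.

Lemma qdot_scale t (a b : quat R) : qdot (qscale t a) b = t * qdot a b.
Proof. by case: a b => ? ? ? ? [? ? ? ?]; qunf; ring. Qed.

Lemma qadd_subK (x y : quat R) : qadd y (qsub x y) = x.
Proof. by case: x y => ? ? ? ? [? ? ? ?]; qunf; f_equal; ring. Qed.

Lemma qconj_neq0 (n : quat R) : n <> q0 -> qconj n <> q0.
Proof. by move=> H E; apply: H; move: E; case: n => ? ? ? ?; qunf => [[E1 E2 E3 E4]]; f_equal; lra. Qed.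

Lemma G_fin c (z1 z2 z4 z5 : hquat R) :
  z1 <> Some c -> z2 <> Some c -> z4 <> Some c -> z5 <> Some c ->
  (on_common_2sphere_or_2plane z1 z2 (Some c) z4 z5 <->
   dep3 (qsub (iota c z2) (iota c z1)) (qsub (iota c z4) (iota c z1)) (qsub (iota c z5) (iota c z1))).
Proof.
move=> N1 N2 N4 N5; split.
- case=> [[c0 [r [n [Hd [H1 [H2 [H3 [H4 H5]]]]]]]] | [p [u [v [Hi [H1 [H2 [H3 [H4 H5]]]]]]]]].
  + have [S1 T1] := PS Hd H3 H1 N1; have [S2 T2] := PS Hd H3 H2 N2.
    have [S4 T4] := PS Hd H3 H4 N4; have [S5 T5] := PS Hd H3 H5 N5.
    case: Hd => r0 n0.
    apply: (@LA3 (qconj (qsub c0 c)) (qconj n)); rewrite ?qdot_sub ?S1 ?S2 ?S4 ?S5 ?T1 ?T2 ?T4 ?T5 ?subrr //.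
    apply: orth_indep; last first.
    * rewrite qdot_conj; case: (H3) => _ H3'.
      have -> : qdot (qsub c0 c) n = - qdot (qsub c c0) n.
        by case: c c0 n {N1 N2 N4 N5 H1 H2 H3 H4 H5 S1 S2 S4 S5 T1 T2 T4 T5 n0 H3'} => ? ? ? ? [? ? ? ?] [? ? ? ?]; qunf; ring.
      by rewrite H3' oppr0.
    * exact: qconj_neq0.
    * move=> E; have : qnorm2 (qconj (qsub c0 c)) = 0 by rewrite E /qnorm2 /qdot /=; ring.
      rewrite qnorm2_conj qnorm2_subC; case: H3 => -> _ /eqP.
      by rewrite expf_eq0 /= gt_eqF.
  + have A1 := PP H3 H1 N1; have A2 := PP H3 H2 N2; have A4 := PP H3 H4 N4; have A5 := PP H3 H5 N5.
    by apply: (@LA2 (qconj u) (qconj v)); apply: sub_span.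
- move=> /LA1 [u [v [Hi [D2 D4 D5]]]].
  have [Hs|Hs] := Classical_Prop.classic (inspan u v (iota c z1)).
  + right; exists c, (qconj u), (qconj v); split; first exact: indep_conj.
    split; first exact: QA.
    split; first by apply: QA => //; exact: span_shift D2 Hs.
    split; first by exists 0, 0; case: c u v {N1 N2 N4 N5 Hi D2 D4 D5 Hs} => ? ? ? ? [? ? ? ?] [? ? ? ?]; qunf; f_equal; ring.
    split; first by apply: QA => //; exact: span_shift D4 Hs.
    by apply: QA => //; exact: span_shift D5 Hs.
  + have [p0 [Hp pu pv [al [be Ev1]]]] := gram_schmidt Hi Hs.
    have [N0 [HN0 [uN vN pN]]] := orth_ex u v p0.
    set M := qscale (1 / (2 * qnorm2 p0)) p0.
    have D1 : inspan u v (qsub (iota c z1) (iota c z1)).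
      have -> : qsub (iota c z1) (iota c z1) = q0.
        by case: (iota c z1) => ? ? ? ?; qunf; f_equal; ring.
      exact: inspan0.
    have [S1 T1] := plane_pt Hp pu pv uN vN pN Ev1 D1.
    have [S2 T2] := plane_pt Hp pu pv uN vN pN Ev1 D2.
    have [S4 T4] := plane_pt Hp pu pv uN vN pN Ev1 D4.
    have [S5 T5] := plane_pt Hp pu pv uN vN pN Ev1 D5.
    have MN : qdot M N0 = 0.
      by rewrite /M qdot_scale pN mulr0.
    have M0 : M <> q0.
      by move=> E; move: S1; rewrite -/M E /qdot /= !mulr0 !addr0 => /eqP; rewrite eq_sym mulf_eq0 invr_eq0 !pnatr_eq0 oner_eq0.
    left; exists (qadd c (qconj M)), (Num.sqrt (qnorm2 M)), (qconj N0); split.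
      split; last exact: qconj_neq0.
      by rewrite sqrtr_gt0 lt_def qnorm2_ge0 qnorm2_neq0.
    split; first exact: QB.
    split; first exact: QB.
    split; first exact: QBc.
    split; first exact: QB.
    exact: QB.
Qed.

Lemma G_inf (x1 x2 x4 x5 : quat R) :
  (on_common_2sphere_or_2plane (Some x1) (Some x2) None (Some x4) (Some x5) <->
   dep3 (qsub x2 x1) (qsub x4 x1) (qsub x5 x1)).
Proof.
split.
- case=> [[c0 [r [n [_ [_ [_ [[] _]]]]]]] | [p [u [v [Hi [H1 [H2 [_ [H4 H5]]]]]]]]].
  move: H1 H2 H4 H5 => /= [a1 [b1 E1]] [a2 [b2 E2]] [a4 [b4 E4]] [a5 [b5 E5]].
  have K : forall x a b, x = qadd p (qadd (qscale a u) (qscale b v)) ->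
      inspan u v (qsub x x1).
    move=> x a b Ex; exists (a - a1), (b - b1); rewrite Ex E1.
    by case: p u v {Ex E1 E2 E4 E5 Hi} => ? ? ? ? [? ? ? ?] [? ? ? ?]; qunf; f_equal; ring.
  exact: (LA2 (K _ _ _ E2) (K _ _ _ E4) (K _ _ _ E5)).
- move=> /LA1 [u [v [Hi [D2 D4 D5]]]]; right; exists x1, u, v; split=> //.
  have K : forall x, inspan u v (qsub x x1) -> on_2plane x1 u v (Some x).
    by move=> x [a [b E]]; exists a, b; rewrite -E qadd_subK.
  split; first by clear Hi D2 D4 D5 K; exists 0, 0; case: x1 u v => ? ? ? ? [? ? ? ?] [? ? ? ?]; qunf; f_equal; ring.
  by split; [exact: K | split; [done | split; exact: K]].
Qed.


Lemma qmulDl x y z : qmul (qadd x y) z = qadd (qmul x z) (qmul y z).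
Proof. by case: x y z => ? ? ? ? [? ? ? ?] [? ? ? ?]; qunf; f_equal; ring. Qed.
Lemma qmulDr x y z : qmul z (qadd x y) = qadd (qmul z x) (qmul z y).
Proof. by case: x y z => ? ? ? ? [? ? ? ?] [? ? ? ?]; qunf; f_equal; ring. Qed.

Lemma qinv_opp x : qinv (qopp x) = qopp (qinv x).
Proof.
rewrite /qinv; have -> : qnorm2 (qopp x) = qnorm2 x by case: x => ? ? ? ?; qunf; ring.
by move: (qnorm2 x)^-1 => t; case: x => ? ? ? ?; qunf; f_equal; ring.
Qed.

Lemma qsub0r x : qsub x q0 = x.
Proof. by case: x => ? ? ? ?; qunf; f_equal; ring. Qed.
Lemma qsub0l x : qsub q0 x = qopp x.
Proof. by case: x => ? ? ? ?; qunf; f_equal; ring. Qed.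

Lemma dep3_AB A B x y z : A <> q0 -> B <> q0 ->
  dep3 (qmul (qmul A x) B) (qmul (qmul A y) B) (qmul (qmul A z) B) <-> dep3 x y z.
Proof. by move=> HA HB; rewrite dep3_mulR // dep3_mulL. Qed.

Lemma dep3_12E x y z : dep3 x y z <-> dep3 y x z.
Proof. by split; apply: dep3_12. Qed.
Lemma dep3_23E x y z : dep3 x y z <-> dep3 x z y.
Proof. by split; apply: dep3_23. Qed.

Definition X x1 c x := qmul (qsub x x1) (qinv (qsub x c)).

Lemma Xsplit x1 c x : x <> c -> X x1 c x = qadd q1 (qmul (qsub c x1) (qinv (qsub x c))).
Proof.
move=> H; rewrite /X; have -> : qsub x x1 = qadd (qsub x c) (qsub c x1).
  by case: x x1 c {H} => ? ? ? ? [? ? ? ?] [? ? ? ?]; qunf; f_equal; ring.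
by rewrite qmulDl qinvr //; exact: qsub_neq0.
Qed.

Lemma key_e x1 c : qinv (qsub c x1) = qopp (qinv (qsub x1 c)).
Proof.
have -> : qsub c x1 = qopp (qsub x1 c) by case: x1 c => ? ? ? ? [? ? ? ?]; qunf; f_equal; ring.
exact: qinv_opp.
Qed.

Lemma P_shift d vy vz : d <> q0 ->
  dep3 q1 (qadd q1 (qmul d vy)) (qadd q1 (qmul d vz)) <->
  dep3 (qinv d) (qadd vy (qinv d)) (qadd vz (qinv d)).
Proof.
move=> Hd.
have E : forall (a b : quat R), qadd a b = qadd b (qscale 1 a).
  by move=> a b; case: a b => ? ? ? ? [? ? ? ?]; qunf; f_equal; ring.
rewrite [qadd q1 (qmul d vy)]E [qadd q1 (qmul d vz)]E dep3_shift.
rewrite -{1}(qinvr Hd) dep3_mulL //.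
have E2 : forall a, qadd a (qinv d) = qadd a (qscale 1 (qinv d)).
  by move=> a; case: a (qinv d) => ? ? ? ? [? ? ? ?]; qunf; f_equal; ring.
by rewrite !E2 dep3_shift.
Qed.


Lemma L2 d v : d <> q0 -> qmul (qinv d) (qadd q1 (qmul d v)) = qadd v (qinv d).
Proof.
move=> Hd; rewrite qmulDr qmul1r qmulA qinvl // qmul1l.
by case: v (qinv d) => ? ? ? ? [? ? ? ?]; qunf; f_equal; ring.
Qed.

Lemma E1lem x1 x2 c : x2 <> x1 -> x2 <> c ->
  q1 = qmul (qmul (qinv (qsub x2 x1)) (X x1 c x2)) (qsub x2 c).
Proof.
move=> H1 H2; rewrite /X qmulA qinvl ?qmul1l ?qinvl //; exact: qsub_neq0.
Qed.

Lemma Q4form x1 x2 c x4 :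
  crossratio (Some x1) (Some x2) (Some c) (Some x4) =
  qmul (qmul (qinv (qsub x2 x1)) (X x1 c x4)) (qsub x2 c).
Proof. by rewrite /crossratio /X qmulA. Qed.

Lemma C_fin x1 x2 c x4 x5 : x2 <> x1 -> x1 <> c -> x2 <> c -> x4 <> c -> x5 <> c ->
  let Q4 := crossratio (Some x1) (Some x2) (Some c) (Some x4) in
  let Q5 := crossratio (Some x1) (Some x2) (Some c) (Some x5) in
  (qmul Q4 Q5 = qmul Q5 Q4 <->
   dep3 (qsub (iota c (Some x2)) (iota c (Some x1))) (qsub (iota c (Some x4)) (iota c (Some x1)))
        (qsub (iota c (Some x5)) (iota c (Some x1)))).
Proof.
move=> H21 H1c H2c H4c H5c Q4 Q5; rewrite /Q4 /Q5 commute_dep3 !Q4form (E1lem H21 H2c).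
rewrite dep3_AB; last exact: qsub_neq0.
  2: exact: qinv_neq0 (qsub_neq0 H21).
have Hd : qsub c x1 <> q0 by apply: qsub_neq0 => E; apply: H1c.
rewrite !Xsplit // -(dep3_mulL _ _ _ (qinv_neq0 Hd)) !L2 // (key_e x1 c) /=.
by [].
Qed.

Lemma C_inf3 x1 x2 x4 x5 : x2 <> x1 ->
  let Q4 := crossratio (Some x1) (Some x2) None (Some x4) in
  let Q5 := crossratio (Some x1) (Some x2) None (Some x5) in
  (qmul Q4 Q5 = qmul Q5 Q4 <-> dep3 (qsub x2 x1) (qsub x4 x1) (qsub x5 x1)).
Proof.
move=> H21 Q4 Q5; rewrite /Q4 /Q5 commute_dep3 /=.
have Hp := qsub_neq0 H21.
by rewrite -(qinvl Hp) dep3_mulL //; exact: qinv_neq0.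
Qed.

Lemma C_none1 x2 c x4 x5 : x2 <> c -> x4 <> c -> x5 <> c ->
  let Q4 := crossratio None (Some x2) (Some c) (Some x4) in
  let Q5 := crossratio None (Some x2) (Some c) (Some x5) in
  (qmul Q4 Q5 = qmul Q5 Q4 <->
   dep3 (qsub (iota c (Some x2)) (iota c None)) (qsub (iota c (Some x4)) (iota c None))
        (qsub (iota c (Some x5)) (iota c None))).
Proof.
move=> H2c H4c H5c Q4 Q5; rewrite /Q4 /Q5 commute_dep3 /= !qsub0r.
have Hp := qsub_neq0 H2c.
by rewrite -(qinvl Hp) dep3_mulR.
Qed.

Lemma C_none2 x1 c x4 x5 : x1 <> c -> x4 <> c -> x5 <> c ->
  let Q4 := crossratio (Some x1) None (Some c) (Some x4) in
  let Q5 := crossratio (Some x1) None (Some c) (Some x5) in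
  (qmul Q4 Q5 = qmul Q5 Q4 <->
   dep3 (qsub (iota c None) (iota c (Some x1))) (qsub (iota c (Some x4)) (iota c (Some x1)))
        (qsub (iota c (Some x5)) (iota c (Some x1)))).
Proof.
move=> H1c H4c H5c Q4 Q5; rewrite /Q4 /Q5 commute_dep3 /=.
have Hd : qsub c x1 <> q0 by apply: qsub_neq0 => E; apply: H1c.
rewrite -!/(X x1 c _) !Xsplit // P_shift // (key_e x1 c) qsub0l.
by [].
Qed.

Lemma C_core4 x1 x2 c y : x2 <> x1 -> x1 <> c -> x2 <> c -> y <> c ->
  dep3 q1 (crossratio (Some x1) (Some x2) (Some c) None)
          (crossratio (Some x1) (Some x2) (Some c) (Some y)) <->
  dep3 (qsub (iota c (Some x2)) (iota c (Some x1))) (qsub q0 (iota c (Some x1)))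
       (qsub (iota c (Some y)) (iota c (Some x1))).
Proof.
move=> H21 H1c H2c Hyc.
rewrite Q4form.
have -> : crossratio (Some x1) (Some x2) (Some c) None =
  qmul (qmul (qinv (qsub x2 x1)) q1) (qsub x2 c) by rewrite /= qmul1r.
rewrite {1}(E1lem H21 H2c) dep3_AB; last exact: qsub_neq0.
  2: exact: qinv_neq0 (qsub_neq0 H21).
have Hd : qsub c x1 <> q0 by apply: qsub_neq0 => E; apply: H1c.
rewrite dep3_12E !Xsplit // P_shift // (key_e x1 c) qsub0l dep3_12E.
by [].
Qed.

Lemma C_none4 x1 x2 c x5 : x2 <> x1 -> x1 <> c -> x2 <> c -> x5 <> c ->
  let Q4 := crossratio (Some x1) (Some x2) (Some c) None in
  let Q5 := crossratio (Some x1) (Some x2) (Some c) (Some x5) in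
  (qmul Q4 Q5 = qmul Q5 Q4 <->
   dep3 (qsub (iota c (Some x2)) (iota c (Some x1))) (qsub (iota c None) (iota c (Some x1)))
        (qsub (iota c (Some x5)) (iota c (Some x1)))).
Proof.
move=> H21 H1c H2c H5c Q4 Q5; rewrite /Q4 /Q5 commute_dep3; exact: C_core4.
Qed.

Lemma C_none5 x1 x2 c x4 : x2 <> x1 -> x1 <> c -> x2 <> c -> x4 <> c ->
  let Q4 := crossratio (Some x1) (Some x2) (Some c) (Some x4) in
  let Q5 := crossratio (Some x1) (Some x2) (Some c) None in
  (qmul Q4 Q5 = qmul Q5 Q4 <->
   dep3 (qsub (iota c (Some x2)) (iota c (Some x1))) (qsub (iota c (Some x4)) (iota c (Some x1)))
        (qsub (iota c None) (iota c (Some x1)))).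
Proof.
move=> H21 H1c H2c H4c Q4 Q5; rewrite /Q4 /Q5 commute_dep3 dep3_23E [X in _ <-> X]dep3_23E.
exact: C_core4.
Qed.

End S.

Lemma neqS (R : realType) (x y : quat R) : Some x <> Some y -> y <> x.
Proof. by move=> H E; apply: H; rewrite E. Qed.
Lemma neqS' (R : realType) (x y : quat R) : Some x <> Some y -> x <> y.
Proof. by move=> H E; apply: H; rewrite E. Qed.

Theorem mainTheorem5 (R : realType) (z1 z2 z3 z4 z5 : hquat R) :
  distinct5 z1 z2 z3 z4 z5 ->
  (on_common_2sphere_or_2plane z1 z2 z3 z4 z5 <->
   qmul (crossratio z1 z2 z3 z4) (crossratio z1 z2 z3 z5)
   = qmul (crossratio z1 z2 z3 z5) (crossratio z1 z2 z3 z4)).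
Proof.
case=> d12 d13 d14 d15 [d23 d24 d25 [d34 d35 d45]].
have s34 : z4 <> z3 by move=> E; apply: d34; rewrite E.
have s35 : z5 <> z3 by move=> E; apply: d35; rewrite E.
case: z3 d13 d23 d34 d35 s34 s35 => [c|] d13 d23 d34 d35 s34 s35.
- have G := G_fin d13 d23 s34 s35.
  case: z1 d12 d13 d14 d15 G => [x1|] d12 d13 d14 d15 G;
  case: z2 d12 d23 d24 d25 G => [x2|] d12 d23 d24 d25 G;
  case: z4 d14 d24 d34 d45 s34 G => [x4|] d14 d24 d34 d45 s34 G;
  case: z5 d15 d25 d35 d45 s35 G => [x5|] d15 d25 d35 d45 s35 G;
  try (exfalso; by [apply: d12 | apply: d14 | apply: d15 | apply: d24 | apply: d25 | apply: d45]).
  + exact: iff_trans G (iff_sym (C_fin (neqS d12) (neqS' d13) (neqS' d23) (neqS' s34) (neqS' s35))).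
  + exact: iff_trans G (iff_sym (C_none5 (neqS d12) (neqS' d13) (neqS' d23) (neqS' s34))).
  + exact: iff_trans G (iff_sym (C_none4 (neqS d12) (neqS' d13) (neqS' d23) (neqS' s35))).
  + exact: iff_trans G (iff_sym (C_none2 (neqS' d13) (neqS' s34) (neqS' s35))).
  + exact: iff_trans G (iff_sym (C_none1 (neqS' d23) (neqS' s34) (neqS' s35))).
- case: z1 d12 d13 d14 d15 => [x1|] d12 d13 d14 d15; last by exfalso; apply: d13.
  case: z2 d12 d23 d24 d25 => [x2|] d12 d23 d24 d25; last by exfalso; apply: d23.
  case: z4 d14 d24 d34 d45 s34 => [x4|] d14 d24 d34 d45 s34; last by exfalso; apply: d34.
  case: z5 d15 d25 d35 d45 s35 => [x5|] d15 d25 d35 d45 s35; last by exfalso; apply: d35.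
  exact: iff_trans (G_inf x1 x2 x4 x5) (iff_sym (C_inf3 x4 x5 (neqS d12))).
Qed.
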